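(* Let $n$ be a positive integer and let $A(n)=(a_{ij})_{i,j\in\mathbb{N}}$ be the greedy matrix described in the context. For every $i\geq 1$ there exists $j$ with $1\leq j\leq i$ and $a_{ij}=1$.
   Context: $\mathbb{N}=\{1,2,3,\dots\}$. Fix a positive integer $n$. The infinite $\{0,1\}$-matrix $A(n)=(a_{ij})_{i,j\in\mathbb{N}}$ is defined recursively. Its entries are determined row by row (row $1$ first), and within each row from left to right, so that $a_{kl}$ is determined after all $a_{ij}$ with $i<k$ and all $a_{kj}$ with $j<l$. One sets $a_{kl}=1$ if and only if all of the following hold: (1) $\sum_{j<l}a_{kj}<n+1$; (2) $\sum_{i<k}a_{il}<n+1$; (3) there is no pair $(i,j)$ with $1\le i<k$, $1\le j<l$ and $a_{ij}=a_{il}=a_{kj}=1$. Otherwise $a_{kl}=0$. *)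

(* Defs.v *)
From mathcomp Require Import all_boot.
Set Implicit Arguments. Unset Strict Implicit. Unset Printing Implicit Defensive.

(* Greedy matrix A(n), indices are positive naturals (1-based).
   [greedy_aux n N k l] computes a_{kl} whenever k + l <= N; every entry
   a_{ij} consulted in the rule for a_{kl} has i + j < k + l. *)
Fixpoint greedy_aux (n N k l : nat) {struct N} : bool :=
  match N with
  | 0 => false
  | N'.+1 =>
    let a := greedy_aux n N' in
    [&& 0 < k, 0 < l,
        (* (1) sum_{j<l} a_{kj} < n+1 *)
        \sum_(1 <= j < l) (a k j : nat) < n.+1,
        (* (2) sum_{i<k} a_{il} < n+1 *)
        \sum_(1 <= i < k) (a i l : nat) < n.+1 &
        (* (3) no rectangle (i,j),(i,l),(k,j) with i<k, j<l *)
        ~~ has (fun i => has (fun j => [&& a i j, a i l & a k j])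
                         (iota 1 l.-1))
              (iota 1 k.-1)]
  end.

(* The entry a_{kl} of A(n) (k, l >= 1; value false outside N x N). *)
Definition greedyA (n k l : nat) : bool := greedy_aux n (k + l) k l.

(* Main.v *)
Require Import Defs.
From mathcomp Require Import all_boot.
From mathcomp Require Import zify.

Lemma stab n N : forall M k l, k + l <= N -> N <= M ->
  greedy_aux n N k l = greedy_aux n M k l.
Proof.
elim: N => [|N IH] M k l hkl hNM.
  have -> : k = 0 by lia.
  by case: M hNM.
case: M hNM => [|M] // hNM.
rewrite /=; case: k hkl => [|k] //; case: l => [|l] // hkl.
have e1 : \sum_(1 <= j < l.+1) (greedy_aux n N k.+1 j : nat)
        = \sum_(1 <= j < l.+1) (greedy_aux n M k.+1 j : nat).
  by apply: eq_big_nat => j /andP[_ hj]; rewrite (IH M) //; lia.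
have e2 : \sum_(1 <= j < k.+1) (greedy_aux n N j l.+1 : nat)
        = \sum_(1 <= j < k.+1) (greedy_aux n M j l.+1 : nat).
  by apply: eq_big_nat => j /andP[_ hj]; rewrite (IH M) //; lia.
rewrite e1 e2; congr [&& _, _, _, _ & ~~ _].
apply: eq_in_has => i; rewrite mem_iota => /andP[h1 h2].
apply: eq_in_has => j; rewrite mem_iota => /andP[h3 h4].
rewrite (IH M i j) ?(IH M i l.+1) ?(IH M k.+1 j) //; lia.
Qed.

Lemma unf n k l : 0 < k -> 0 < l ->
  greedyA n k l = [&& \sum_(1 <= j < l) (greedyA n k j : nat) < n.+1,
     \sum_(1 <= i < k) (greedyA n i l : nat) < n.+1 &
     ~~ has (fun i => has (fun j => [&& greedyA n i j, greedyA n i l & greedyA n k j])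
                         (iota 1 l.-1)) (iota 1 k.-1)].
Proof.
move=> hk hl; rewrite /greedyA.
have -> : k + l = (k + l).-1.+1 by lia.
set N := (k + l).-1.
rewrite [LHS]/= hk hl /=.
have e1 : \sum_(1 <= j < l) (greedy_aux n N k j : nat)
        = \sum_(1 <= j < l) (greedy_aux n (k + j) k j : nat).
  by apply: eq_big_nat => j /andP[_ hj]; rewrite (@stab n (k + j) N) //; lia.
have e2 : \sum_(1 <= j < k) (greedy_aux n N j l : nat)
        = \sum_(1 <= j < k) (greedy_aux n (j + l) j l : nat).
  by apply: eq_big_nat => j /andP[_ hj]; rewrite (@stab n (j + l) N) //; lia.
rewrite e1 e2; congr [&& _, _ & ~~ _].
apply: eq_in_has => i; rewrite mem_iota => /andP[h1 h2].
apply: eq_in_has => j; rewrite mem_iota => /andP[h3 h4].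
rewrite (@stab n (i + j) N) ?(@stab n (i + l) N i l)
        ?(@stab n (k + j) N k j) //; lia.
Qed.

Lemma rowsum n k L : 0 < k -> \sum_(1 <= j < L) (greedyA n k j : nat) <= n.+1.
Proof.
move=> hk; elim: L => [|L IH]; first by rewrite big_geq.
case: L IH => [|L] IH; first by rewrite big_geq.
rewrite big_nat_recr //=.
case E: (greedyA n k L.+1); last by rewrite addn0.
move: E; rewrite unf // => /and3P[h _ _]; rewrite addn1; exact: h.
Qed.

Theorem lemma3p4 (n : nat) (hn : 0 < n) (i : nat) (hi : 1 <= i) :
  exists j : nat, [/\ 1 <= j, j <= i & greedyA n i j = true].
Proof.
case E: (has (fun j => greedyA n i j) (iota 1 i)).
  case/hasP: E => j; rewrite mem_iota => /andP[h1 h2] hj.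
  by exists j; split => //; lia.
exfalso; move/hasPn: E => E.
have col : forall j, 1 <= j <= i -> n.+1 <= \sum_(1 <= r < i) (greedyA n r j : nat).
  move=> j /andP[h1 h2].
  have hm : j \in iota 1 i by rewrite mem_iota; apply/andP; split; lia.
  have := E j hm.
  have hi0 : 0 < i by lia.
  have hj0 : 0 < j by lia.
  rewrite unf //.
  have s0 : \sum_(1 <= j' < j) (greedyA n i j' : nat) = 0.
    apply: big1_seq => j' /andP[_]; rewrite mem_index_iota => /andP[h0 h].
    have hm' : j' \in iota 1 i by rewrite mem_iota; apply/andP; split; lia.
    by move/negbTE: (E j' hm') => ->.
  have s3 : has (fun i0 => has (fun j0 => [&& greedyA n i0 j0, greedyA n i0 j & greedyA n i j0])
                         (iota 1 j.-1)) (iota 1 i.-1) = false.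
    apply/negbTE/hasPn => r _; apply/hasPn => j' hj'.
    move: hj'; rewrite mem_iota => /andP[h3 h4].
    have hm' : j' \in iota 1 i by rewrite mem_iota; apply/andP; split; lia.
    by move/negbTE: (E j' hm') => ->; rewrite !andbF.
  rewrite s0 s3 /= andbT ltnNge negbK; exact.
have lo : i * n.+1 <= \sum_(1 <= j < i.+1) \sum_(1 <= r < i) (greedyA n r j : nat).
  have : \sum_(1 <= j < i.+1) n.+1 <= \sum_(1 <= j < i.+1) \sum_(1 <= r < i) (greedyA n r j : nat).
    by rewrite !big_nat; apply: leq_sum => j hj; apply: col.
  by rewrite sum_nat_const_nat subn1.
have hi' : \sum_(1 <= r < i) \sum_(1 <= j < i.+1) (greedyA n r j : nat) <= \sum_(1 <= r < i) n.+1.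
  rewrite !big_nat; apply: leq_sum => r /andP[hr _]; exact: rowsum.
rewrite sum_nat_const_nat in hi'.
have ex : \sum_(1 <= r < i) \sum_(1 <= j < i.+1) (greedyA n r j : nat)
        = \sum_(1 <= j < i.+1) \sum_(1 <= r < i) (greedyA n r j : nat) by apply: exchange_big_nat.
rewrite ex in hi'.
lia.
Qed.
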